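(* Let $G$ be a strategic game with players $1,\dots,n$. The $\mathcal{L}_\nu$-formula $$(\mathit{rat}_{gbr}\wedge\Box^*\mathit{rat}_{gbr})\rightarrow\nu X.\,O_{lsd}X$$ is a theorem of the proof system $\mathbf{R}$, where $gbr=(gbr_1,\dots,gbr_n)$ and $lsd=(lsd_1,\dots,lsd_n)$.
   Context: Strategic game $G=(T_1,\dots,T_n,<_1,\dots,<_n)$: arbitrary nonempty strategy sets $T_i$, $<_i$ a total linear order on $T=\prod_iT_i$, $\ge_i$ its reflexive closure; restriction $S=(S_1,\dots,S_n)$, $S_i\subseteq T_i$. $\mathcal{L}_O$: first-order formulas from atoms $C(a)$, $a\ge^i_cb$ ($a,b,c$ variables or constant $o$) with $\neg,\wedge,\exists$; abbreviations $\exists x\in C\,\phi:=\exists x(C(x)\wedge\phi)$, $\forall x\in C\,\phi:=\forall x(C(x)\to\phi)$. In an optimality model $(G,G',s)$ with assignment $\alpha$ ($o\mapsto s$): $C(x)$ iff $\alpha(x)_j\in G'_j$ for all $j$; $x\ge^i_zy$ iff $(\alpha(x)_i,\alpha(z)_{-i})\ge_i(\alpha(y)_i,\alpha(z)_{-i})$. Optimality condition for $i$: closed formula using only $\ge^i$; positive if every $C(\cdot)$ is under an even number of negations. Specific conditions: $gbr_i:=\exists z\in C\,\forall y\;o\ge^i_zy$ (global best response) and $lsd_i:=\forall y\in C\,\exists z\in C\;o\ge^i_zy$ (not locally strictly dominated). Belief model, $G_E$, and $\mathcal{L}_\nu$ with its semantics: $(\Omega,\bar s_1,\dots,\bar s_n,P_1,\dots,P_n)$;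 $(G_E)_i=\{\bar s_i(u):u\in E\}$; $\psi::=\mathit{rat}_{\phi_i}\mid X\mid\psi\wedge\psi\mid\neg\psi\mid\Box_i\psi\mid O_{\phi_i}\psi\mid\nu X.\psi$ ($\nu$-free body); $[\![\mathit{rat}_{\phi_i}]\!]_E=\{\omega:(G,G_{P_i(\omega)},\bar s(\omega))\models\phi_i\}$, $[\![X]\!]_E=E$, $[\![\Box_i\psi]\!]_E=\{\omega:P_i(\omega)\subseteq[\![\psi]\!]_E\}$, $[\![O_{\phi_i}\psi]\!]_E=\{\omega:(G,G_{[\![\psi]\!]_E},\bar s(\omega))\models\phi_i\}$, $[\![\nu X.\psi]\!]_E$ the transfinite-iteration outcome (starting from $\Omega$, intersections at limits) of $F\mapsto[\![\psi]\!]_F\cap F$. Abbreviations $\mathit{rat}_\phi,\Box\psi,O_\phi\psi$ as conjunctions over players and $\Box^*\psi:=\nu X.\Box(X\wedge\psi)$. Positive in $X$: each $X$ under an even number of negations and inside $O_{\phi_i}$ only for positive $\phi_i$. Proof system $\mathbf{P}$: propositional reasoning plus, for positive optimality conditions and $\psi$ positive in $X$: $\mathit{rat}_\phi\to(\Box\chi\to O_\phi\chi)$; $\nu X.\psi\to\psi[X\mapsto\nu X.\psi]$; from $\chi\to\psi[X\mapsto\chi]$ infer $\chi\to\nu X.\psi$. Proof system $\mathbf{R}$: $\mathbf{P}$ plus a standard first-order proof system for $\mathcal{L}_O$-formulas, plus the rules (Incl) from $\chi\to\psi$ infer $\nu X.\chi\to\nu X.\psi$, where $\chi$ is positive in $X$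 and $\psi$ is any $\nu$-free formula; and (Link) from $\phi_i\to\psi_i$ for all $i\in[1..n]$ (as $\mathcal{L}_O$-formulas) infer $O_\phi X\to O_\psi X$. *)

(* Defs.v *)
(* Syntax of L_O and L_nu, the first-order proof system and
   the proof system R, following the paper. Players are numbered 0..n-1. *)
From Stdlib Require Import Arith Lia.

Definition player (n : nat) := { i : nat | i < n }.

Record StrategicGame (n : nat) := {
  strat : player n -> Type;
  strat_nonempty : forall i, inhabited (strat i);
  (* pref i x y  means  x <_i y  on profiles T = prod_i T_i *)
  pref : player n -> (forall j, strat j) -> (forall j, strat j) -> Prop;
  pref_irrefl : forall i x, ~ pref i x x;
  pref_trans : forall i x y z, pref i x y -> pref i y z -> pref i x z;
  pref_total : forall i x y, pref i x y \/ x = y \/ pref i y x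
}.

Inductive term := TV (k : nat) | TO.

Inductive oform :=
| OC (t : term)
| OGe (i : nat) (a b c : term)         (* a >=^i_c b *)
| ONot (p : oform)
| OAnd (p q : oform)
| OEx (p : oform).                     (* binds de Bruijn index 0 *)

Definition OImp (p q : oform) := ONot (OAnd p (ONot q)).
Definition OAll (p : oform) := ONot (OEx (ONot p)).

Definition lift_t (k : nat) (t : term) : term :=
  match t with TV m => if k <=? m then TV (S m) else TV m | TO => TO end.
Fixpoint olift (k : nat) (p : oform) : oform :=
  match p with
  | OC t => OC (lift_t k t)
  | OGe i a b c => OGe i (lift_t k a) (lift_t k b) (lift_t k c)
  | ONot p => ONot (olift k p)
  | OAnd p q => OAnd (olift k p) (olift k q)
  | OEx p => OEx (olift (S k) p)
  end.

Definition subst_t (k : nat) (s t : term) : term :=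
  match t with
  | TV m => if m =? k then s else if k <? m then TV (pred m) else TV m
  | TO => TO
  end.
Fixpoint osubst (k : nat) (s : term) (p : oform) : oform :=
  match p with
  | OC t => OC (subst_t k s t)
  | OGe i a b c => OGe i (subst_t k s a) (subst_t k s b) (subst_t k s c)
  | ONot p => ONot (osubst k s p)
  | OAnd p q => OAnd (osubst k s p) (osubst k s q)
  | OEx p => OEx (osubst (S k) (lift_t 0 s) p)
  end.

Definition tclosed (k : nat) (t : term) : Prop :=
  match t with TV m => m < k | TO => True end.
Fixpoint oclosed (k : nat) (p : oform) : Prop :=
  match p with
  | OC t => tclosed k t
  | OGe _ a b c => tclosed k a /\ tclosed k b /\ tclosed k c
  | ONot p => oclosed k p
  | OAnd p q => oclosed k p /\ oclosed k q
  | OEx p => oclosed (S k) p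
  end.

Fixpoint wfO (n : nat) (p : oform) : Prop :=
  match p with
  | OC _ => True
  | OGe i _ _ _ => i < n
  | ONot p => wfO n p
  | OAnd p q => wfO n p /\ wfO n q
  | OEx p => wfO n p
  end.

Fixpoint onlyGe (i : nat) (p : oform) : Prop :=
  match p with
  | OC _ => True
  | OGe j _ _ _ => j = i
  | ONot p => onlyGe i p
  | OAnd p q => onlyGe i p /\ onlyGe i q
  | OEx p => onlyGe i p
  end.

Definition optcond (n i : nat) (p : oform) : Prop :=
  i < n /\ oclosed 0 p /\ onlyGe i p.

(* every C(.) under an even number of negations (b = true: even so far) *)
Fixpoint posC (b : bool) (p : oform) : Prop :=
  match p with
  | OC _ => b = true
  | OGe _ _ _ _ => True
  | ONot p => posC (negb b) p
  | OAnd p q => posC b p /\ posC b q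
  | OEx p => posC b p
  end.
Definition posO (p : oform) : Prop := posC true p.

(* propositional tautology instances (atoms and OEx are propositional atoms) *)
Fixpoint oeval (v : oform -> bool) (p : oform) : bool :=
  match p with
  | ONot p => negb (oeval v p)
  | OAnd p q => oeval v p && oeval v q
  | _ => v p
  end.
Definition otaut (p : oform) : Prop := forall v, oeval v p = true.

(* Standard (Shoenfield-style) Hilbert system for first-order logic
   without equality in the language {not, and, exists}. *)
Inductive FOprov (n : nat) : oform -> Prop :=
| fo_taut p : wfO n p -> otaut p -> FOprov n p
| fo_mp p q : FOprov n (OImp p q) -> FOprov n p -> FOprov n q
| fo_exI p t : wfO n (OEx p) -> FOprov n (OImp (osubst 0 t p) (OEx p))
| fo_exE p q : FOprov n (OImp p (olift 0 q)) -> FOprov n (OImp (OEx p) q).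

(* gbr_i := exists z in C, forall y, o >=^i_z y *)
Definition gbr (i : nat) : oform :=
  OEx (OAnd (OC (TV 0)) (OAll (OGe i TO (TV 0) (TV 1)))).
(* lsd_i := forall y in C, exists z in C, o >=^i_z y *)
Definition lsd (i : nat) : oform :=
  OAll (OImp (OC (TV 0)) (OEx (OAnd (OC (TV 0)) (OGe i TO (TV 1) (TV 0))))).

Inductive nform :=
| NRat (i : nat) (p : oform)
| NVar
| NAnd (a b : nform)
| NNot (a : nform)
| NBox (i : nat) (a : nform)
| NOpt (i : nat) (p : oform) (a : nform)
| NNu (a : nform).

Definition NImp (a b : nform) := NNot (NAnd a (NNot b)).

Fixpoint nufree (a : nform) : Prop :=
  match a with
  | NRat _ _ | NVar => True
  | NAnd a b => nufree a /\ nufree b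
  | NNot a | NBox _ a | NOpt _ _ a => nufree a
  | NNu _ => False
  end.

Fixpoint wfN (n : nat) (a : nform) : Prop :=
  match a with
  | NRat i p => optcond n i p
  | NVar => True
  | NAnd a b => wfN n a /\ wfN n b
  | NNot a => wfN n a
  | NBox i a => i < n /\ wfN n a
  | NOpt i p a => optcond n i p /\ wfN n a
  | NNu a => nufree a /\ wfN n a
  end.

(* a[X |-> c] (X is bound under NNu) *)
Fixpoint nsubst (c a : nform) : nform :=
  match a with
  | NRat i p => NRat i p
  | NVar => c
  | NAnd a b => NAnd (nsubst c a) (nsubst c b)
  | NNot a => NNot (nsubst c a)
  | NBox i a => NBox i (nsubst c a)
  | NOpt i p a => NOpt i p (nsubst c a)
  | NNu a => NNu a
  end.

Fixpoint occX (a : nform) : bool :=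
  match a with
  | NRat _ _ => false
  | NVar => true
  | NAnd a b => occX a || occX b
  | NNot a | NBox _ a | NOpt _ _ a => occX a
  | NNu _ => false
  end.

Fixpoint posX (b : bool) (a : nform) : Prop :=
  match a with
  | NRat _ _ => True
  | NVar => b = true
  | NAnd a c => posX b a /\ posX b c
  | NNot a => posX (negb b) a
  | NBox _ a => posX b a
  | NOpt _ p a => (occX a = true -> posO p) /\ posX b a
  | NNu _ => True
  end.

(* big conjunction f 0 /\ ... /\ f (n-1)  (meaningful for n >= 1) *)
Fixpoint bigAnd (f : nat -> nform) (n : nat) : nform :=
  match n with
  | 0 => f 0
  | S m => match m with 0 => f 0 | _ => NAnd (bigAnd f m) (f m) end
  end.

Definition ratv (n : nat) (phi : nat -> oform) := bigAnd (fun i => NRat i (phi i)) n.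
Definition boxv (n : nat) (a : nform) := bigAnd (fun i => NBox i a) n.
Definition Ov (n : nat) (phi : nat -> oform) (a : nform) :=
  bigAnd (fun i => NOpt i (phi i) a) n.
Definition boxstar (n : nat) (a : nform) := NNu (boxv n (NAnd NVar a)).

Fixpoint neval (v : nform -> bool) (a : nform) : bool :=
  match a with
  | NNot a => negb (neval v a)
  | NAnd a b => neval v a && neval v b
  | _ => v a
  end.
Definition ntaut (a : nform) : Prop := forall v, neval v a = true.

(* The proof system R (= P plus first-order logic, Incl and Link). *)
Inductive Rprov (n : nat) : nform -> Prop :=
| r_taut a : wfN n a -> ntaut a -> Rprov n a
| r_mp a b : Rprov n (NImp a b) -> Rprov n a -> Rprov n b
| r_ratbox (phi : nat -> oform) (c : nform) :
    (forall i, i < n -> optcond n i (phi i) /\ posO (phi i)) -> wfN n c ->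
    Rprov n (NImp (ratv n phi) (NImp (boxv n c) (Ov n phi c)))
| r_unfold a : nufree a -> wfN n a -> posX true a ->
    Rprov n (NImp (NNu a) (nsubst (NNu a) a))
| r_ind c a : nufree a -> wfN n a -> posX true a ->
    Rprov n (NImp c (nsubst c a)) -> Rprov n (NImp c (NNu a))
| r_incl c a : nufree c -> wfN n c -> posX true c -> nufree a -> wfN n a ->
    Rprov n (NImp c a) -> Rprov n (NImp (NNu c) (NNu a))
| r_link (phi psi : nat -> oform) :
    (forall i, i < n -> optcond n i (phi i) /\ optcond n i (psi i) /\
                        FOprov n (OImp (phi i) (psi i))) ->
    Rprov n (NImp (Ov n phi NVar) (Ov n psi NVar)).

(* Main.v *)
Require Import Defs.
From Stdlib Require Import Arith Lia.

Ltac tautv := intros v; simpl;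
  repeat match goal with |- context [v ?x] => destruct (v x) end; reflexivity.
Ltac tautn := intros v; simpl;
  repeat match goal with |- context [neval v ?x] => destruct (neval v x) end; reflexivity.

Lemma bigAnd_P (P : nform -> Prop) f m :
  (forall a b, P a -> P b -> P (NAnd a b)) ->
  (forall i, i < m -> P (f i)) -> 1 <= m -> P (bigAnd f m).
Proof.
  intros HA. induction m as [|m IH]; intros Hf Hm; [lia|].
  destruct m as [|m'].
  - simpl. apply Hf; lia.
  - change (P (NAnd (bigAnd f (S m')) (f (S m')))).
    apply HA; [apply IH; [intros; apply Hf; lia | lia] | apply Hf; lia].
Qed.

Lemma nsubst_bigAnd c f m :
  nsubst c (bigAnd f m) = bigAnd (fun i => nsubst c (f i)) m.
Proof.
  induction m as [|m IH]; [reflexivity|].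
  destruct m as [|m']; [reflexivity|].
  change (NAnd (nsubst c (bigAnd f (S m'))) (nsubst c (f (S m'))) =
          NAnd (bigAnd (fun i => nsubst c (f i)) (S m')) (nsubst c (f (S m')))).
  now rewrite IH.
Qed.

Lemma bigAnd_ext f g m : (forall i, f i = g i) -> bigAnd f m = bigAnd g m.
Proof.
  intros H. induction m as [|m IH]; [apply H|].
  destruct m as [|m']; [apply H|].
  change (NAnd (bigAnd f (S m')) (f (S m')) = NAnd (bigAnd g (S m')) (g (S m'))).
  now rewrite IH, H.
Qed.

Lemma nsubst_ratv c m phi : nsubst c (ratv m phi) = ratv m phi.
Proof. unfold ratv. rewrite nsubst_bigAnd. apply bigAnd_ext. reflexivity. Qed.

Section S.
Variable n : nat.
Hypothesis Hn : 1 <= n.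


Lemma imp_trans a b c : wfN n a -> wfN n b -> wfN n c ->
  Rprov n (NImp a b) -> Rprov n (NImp b c) -> Rprov n (NImp a c).
Proof.
  intros H H0 H1 H2 H3. apply (r_mp _ _ _ (r_mp _ _ _ (r_taut n (NImp (NImp a b) (NImp (NImp b c) (NImp a c))) ltac:(unfold NImp; simpl; tauto) ltac:(tautn)) H2) H3).
Qed.

Lemma comb b s r o : wfN n s -> wfN n b -> wfN n r -> wfN n o ->
  Rprov n (NImp s b) -> Rprov n (NImp r (NImp b o)) -> Rprov n (NImp (NAnd s r) o).
Proof.
  intros H H0 H1 H2 H3 H4. apply (r_mp _ _ _ (r_mp _ _ _ (r_taut n (NImp (NImp s b) (NImp (NImp r (NImp b o)) (NImp (NAnd s r) o))) ltac:(unfold NImp; simpl; tauto) ltac:(tautn)) H3) H4).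
Qed.

Lemma swapL a b x : wfN n a -> wfN n b -> wfN n x ->
  Rprov n (NImp (NAnd b a) x) -> Rprov n (NImp (NAnd a b) x).
Proof.
  intros. eapply r_mp; [|eassumption].
  apply r_taut; [unfold NImp; simpl; tauto|]. tautn.
Qed.

Lemma fo2 p1 p2 q : wfO n (OImp p1 (OImp p2 q)) -> otaut (OImp p1 (OImp p2 q)) ->
  FOprov n p1 -> FOprov n p2 -> FOprov n q.
Proof. intros. eapply fo_mp; [eapply fo_mp|]; [apply fo_taut; eassumption| |]; eassumption. Qed.

Lemma fo1 p1 q : wfO n (OImp p1 q) -> otaut (OImp p1 q) -> FOprov n p1 -> FOprov n q.
Proof. intros. eapply fo_mp; [apply fo_taut; eassumption|]; eassumption. Qed.

Lemma gbr_lsd i : i < n -> FOprov n (OImp (gbr i) (lsd i)).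
Proof.
  intros Hi.
  assert (E1 : FOprov n (OImp (OAnd (OC (TV 1)) (OGe i TO (TV 0) (TV 1)))
                 (OEx (OAnd (OC (TV 0)) (OGe i TO (TV 1) (TV 0)))))).
  { exact (fo_exI n (OAnd (OC (TV 0)) (OGe i TO (TV 1) (TV 0))) (TV 1) (conj I Hi)). }
  assert (E2 : FOprov n (OImp (ONot (OGe i TO (TV 0) (TV 1)))
                 (OEx (ONot (OGe i TO (TV 0) (TV 2)))))).
  { exact (fo_exI n (ONot (OGe i TO (TV 0) (TV 2))) (TV 0) Hi). }
  assert (A : FOprov n (OImp (ONot (OImp (OC (TV 0)) (OEx (OAnd (OC (TV 0)) (OGe i TO (TV 1) (TV 0))))))
                 (ONot (OAnd (OC (TV 1)) (OAll (OGe i TO (TV 0) (TV 2))))))).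
  { eapply fo2; [| | exact E1 | exact E2]; [simpl; tauto | tautv]. }
  pose proof (fo_exE n _ (ONot (OAnd (OC (TV 0)) (OAll (OGe i TO (TV 0) (TV 1))))) A) as Bq.
  assert (Cq : FOprov n (OImp (OAnd (OC (TV 0)) (OAll (OGe i TO (TV 0) (TV 1)))) (lsd i))).
  { eapply fo1; [| | exact Bq]; [simpl; tauto | tautv]. }
  exact (fo_exE n _ (lsd i) Cq).
Qed.

Lemma opt_gbr0 i : i < n -> optcond n i (gbr i).
Proof. intros. unfold optcond; simpl; repeat split; auto. Qed.

Lemma wf_rat : wfN n (ratv n gbr).
Proof.
  unfold ratv, boxv, Ov; apply bigAnd_P; [simpl; tauto| |exact Hn].
  intros i Hi. simpl. apply opt_gbr0; auto.
Qed.

Lemma wf_Ov phi c : (forall i, i < n -> optcond n i (phi i)) -> wfN n c -> wfN n (Ov n phi c).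
Proof.
  intros H Hc. unfold ratv, boxv, Ov; apply bigAnd_P; [simpl; tauto| |exact Hn].
  intros i Hi. simpl. auto.
Qed.

Lemma wf_box c : wfN n c -> wfN n (boxv n c).
Proof.
  intros Hc. unfold ratv, boxv, Ov; apply bigAnd_P; [simpl; tauto| |exact Hn].
  intros i Hi. simpl. auto.
Qed.

Lemma opt_gbr i : i < n -> optcond n i (gbr i).
Proof. intros. unfold optcond; simpl; repeat split; auto. Qed.
Lemma opt_lsd i : i < n -> optcond n i (lsd i).
Proof. intros. unfold optcond; simpl; repeat split; auto. Qed.

Lemma nf_rat : nufree (ratv n gbr).
Proof. unfold ratv, boxv, Ov; apply bigAnd_P; [simpl; tauto| |exact Hn]. intros; simpl; auto. Qed.
Lemma nf_box c : nufree c -> nufree (boxv n c).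
Proof. intros. unfold ratv, boxv, Ov; apply bigAnd_P; [simpl; tauto| |exact Hn]. intros; simpl; auto. Qed.
Lemma nf_Ov phi c : nufree c -> nufree (Ov n phi c).
Proof. intros. unfold ratv, boxv, Ov; apply bigAnd_P; [simpl; tauto| |exact Hn]. intros; simpl; auto. Qed.
Lemma px_rat : posX true (ratv n gbr).
Proof. unfold ratv, boxv, Ov; apply bigAnd_P; [simpl; tauto| |exact Hn]. intros; simpl; auto. Qed.

End S.

Theorem theorem2 (n : nat) (G : StrategicGame n) (Hn : 1 <= n) :
  Rprov n (NImp (NAnd (ratv n gbr) (boxstar n (ratv n gbr)))
                (NNu (Ov n lsd NVar))).
Proof.
  set (R := ratv n gbr).
  set (S := boxstar n R).
  set (c := NAnd S R).
  assert (wR : wfN n R) by exact (wf_rat n Hn).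
  assert (nR : nufree R) by exact (nf_rat n Hn).
  assert (wS : wfN n S).
  { simpl. split; [apply nf_box; simpl; auto | apply wf_box; simpl; auto]. }
  assert (wc : wfN n c) by (simpl; auto).
  assert (wB : wfN n (boxv n c)) by (apply wf_box; auto).
  assert (wO : wfN n (Ov n gbr c)) by (apply wf_Ov; auto; apply opt_gbr).
  assert (U : Rprov n (NImp S (boxv n c))).
  { pose proof (r_unfold n (boxv n (NAnd NVar R))) as H.
    unfold boxv in H. rewrite nsubst_bigAnd in H.
    replace (boxv n c) with (bigAnd (fun i : nat =>
           nsubst (NNu (bigAnd (fun i0 : nat => NBox i0 (NAnd NVar R)) n))
             (NBox i (NAnd NVar R))) n).
    2:{ apply bigAnd_ext. intros i. simpl. unfold R. rewrite nsubst_ratv. reflexivity. }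
    apply H.
    - apply nf_box; simpl; auto.
    - apply wf_box; simpl; auto.
    - unfold ratv, boxv, Ov; apply bigAnd_P; [simpl; tauto| |exact Hn]. intros; simpl; split; auto.
      apply px_rat; auto. }
  assert (RB : Rprov n (NImp R (NImp (boxv n c) (Ov n gbr c)))).
  { apply r_ratbox; auto. intros i Hi; split; [apply opt_gbr; auto|].
    unfold posO; simpl; auto. }
  assert (Hc : Rprov n (NImp c (Ov n gbr c))) by (apply (comb n (boxv n c) S R (Ov n gbr c)); auto).
  assert (wA : wfN n (Ov n gbr NVar)) by (apply wf_Ov; simpl; auto; apply opt_gbr).
  assert (wL : wfN n (Ov n lsd NVar)) by (apply wf_Ov; simpl; auto; apply opt_lsd).
  assert (nA : nufree (Ov n gbr NVar)) by (apply nf_Ov; simpl; auto).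
  assert (nL : nufree (Ov n lsd NVar)) by (apply nf_Ov; simpl; auto).
  assert (pA : posX true (Ov n gbr NVar)).
  { unfold ratv, boxv, Ov; apply bigAnd_P; [simpl; tauto| |exact Hn]. intros; simpl; split; auto.
    intros _; unfold posO; simpl; auto. }
  assert (I1 : Rprov n (NImp c (NNu (Ov n gbr NVar)))).
  { apply r_ind; auto. unfold Ov. rewrite nsubst_bigAnd. exact Hc. }
  assert (I2 : Rprov n (NImp (NNu (Ov n gbr NVar)) (NNu (Ov n lsd NVar)))).
  { apply r_incl; auto. apply r_link. intros i Hi.
    split; [apply opt_gbr; auto|]. split; [apply opt_lsd; auto|].
    apply gbr_lsd; auto. }
  apply swapL; auto; [simpl; auto|].
  eapply imp_trans; [exact wc | | | exact I1 | exact I2]; simpl; auto.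
Qed.
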